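(* Let $\mathcal H$ be a complex Hilbert space and let $T\in\mathcal B(\mathcal H)$ satisfy $\sigma_{ap}(T)\subseteq\partial\mathbb D$ and be such that $T'|_{\mathcal H'_u}$ is hyponormal, where $T'=T(T^*T)^{-1}$ and $\mathcal H'_u:=\bigcap_{n\ge0}\mathcal R(T'^n)$. Then: (i) if $T$ is invertible, then $T$ is unitary; (ii) if $T$ is analytic, then $T$ is completely non-normal.
   Context: $\sigma_{ap}(T)$ is the approximate point spectrum; the condition $\sigma_{ap}(T)\subseteq\partial\mathbb D$ implies $0\notin\sigma_{ap}(T)$, so $T^*T$ is invertible and $T'$ is defined. $\mathcal H'_u$ is invariant under $T'$, and $T'|_{\mathcal H'_u}$ denotes the restriction. $A$ is hyponormal if $A^*A-AA^*\ge0$. $T$ is analytic if $\bigcap_n\mathcal R(T^n)=\{0\}$; completely non-normal if no nonzero closed subspace reduces $T$ to a normal operator. *)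

(* Defs.v *)
From mathcomp Require Import all_boot all_algebra.
From mathcomp Require Import boolp reals.
From mathcomp.real_closed Require Export complex.
Import GRing.Theory Num.Theory.
Set Implicit Arguments. Unset Strict Implicit. Unset Printing Implicit Defensive.
Local Open Scope ring_scope.

Section Hilbert.
Variable R : realType.
Local Notation C := R[i].
Variable V : lmodType C.
Variable ip : V -> V -> C.  (* inner product, linear in the first argument *)

Definition inner_product : Prop :=
  [/\ forall (a : C) (x y z : V), ip (a *: x + y) z = a * ip x z + ip y z,
      forall x y, ip y x = (ip x y)^*,
      forall x, 0 <= ip x x
    & forall x, ip x x = 0 -> x = 0].

Definition hnorm (x : V) : R := Num.sqrt (complex.Re (ip x x)).

Definition cvg_to (u : nat -> V) (l : V) : Prop :=
  forall e : R, 0 < e -> exists N, forall n, (N <= n)%N -> hnorm (u n - l) < e.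

Definition cauchy_seq (u : nat -> V) : Prop :=
  forall e : R, 0 < e -> exists N, forall m n, (N <= m)%N -> (N <= n)%N ->
    hnorm (u m - u n) < e.

Definition complete : Prop := forall u, cauchy_seq u -> exists l, cvg_to u l.

Definition lin_op (A : V -> V) : Prop :=
  forall (a : C) (x y : V), A (a *: x + y) = a *: A x + A y.

Definition bounded_op (A : V -> V) : Prop :=
  lin_op A /\ exists M : R, forall x, hnorm (A x) <= M * hnorm x.

Definition is_adjoint (A S : V -> V) : Prop :=
  bounded_op S /\ forall x y, ip (A x) y = ip x (S y).

(* A^* (exists and is unique for A in B(H)) *)
Definition adj (A : V -> V) : V -> V :=
  match pselect (exists S, is_adjoint A S) with
  | left h => proj1_sig (cid h)
  | right _ => A
  end.

Definition is_inverse (A S : V -> V) : Prop :=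
  bounded_op S /\ (forall x, S (A x) = x) /\ (forall x, A (S x) = x).

Definition invertible (A : V -> V) : Prop := exists S, is_inverse A S.

Definition inv_op (A : V -> V) : V -> V :=
  match pselect (exists S, is_inverse A S) with
  | left h => proj1_sig (cid h)
  | right _ => A
  end.

Definition Tprime (T : V -> V) : V -> V := T \o inv_op (adj T \o T).

Definition ap_spectrum (T : V -> V) (lam : C) : Prop :=
  forall e : R, 0 < e -> exists x, hnorm x = 1 /\ hnorm (T x - lam *: x) < e.

(* the restriction A|_M (M invariant under A) is hyponormal:
   (A|_M)^* (A|_M) - (A|_M)(A|_M)^* >= 0, where S plays (A|_M)^* *)
Definition hyponormal_restr (M : V -> Prop) (A : V -> V) : Prop :=
  (forall x, M x -> M (A x)) /\
  exists S : V -> V,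
    (forall x, M x -> M (S x)) /\
    (forall x y, M x -> M y -> ip (A x) y = ip x (S y)) /\
    (forall x, M x -> 0 <= ip (S (A x) - A (S x)) x).

Definition unitary (T : V -> V) : Prop :=
  (forall x, adj T (T x) = x) /\ (forall x, T (adj T x) = x).

Definition closed_subspace (M : V -> Prop) : Prop :=
  M 0 /\ (forall (a : C) x y, M x -> M y -> M (a *: x + y)) /\
  (forall u l, (forall n, M (u n)) -> cvg_to u l -> M l).

Definition reduces (M : V -> Prop) (T : V -> V) : Prop :=
  (forall x, M x -> M (T x)) /\ (forall x, M x -> M (adj T x)).

Definition completely_non_normal (T : V -> V) : Prop :=
  forall M, closed_subspace M -> reduces M T ->
    (forall x, M x -> adj T (T x) = T (adj T x)) ->
    forall x, M x -> x = 0.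

End Hilbert.

Definition Hu {X : Type} (A : X -> X) (y : X) : Prop :=
  forall n : nat, exists x, y = iter n A x.

Definition analytic {R : realType} {V : lmodType R[i]} (T : V -> V) : Prop :=
  forall y, Hu T y -> y = 0.

(* Main.v *)
Require Import Defs.
From mathcomp Require Import all_boot all_algebra.
From mathcomp Require Import boolp reals classical_sets.
From mathcomp.real_closed Require Import complex.
From mathcomp Require Import order.
From mathcomp Require Import ring lra.
From mathcomp Require separable cyclotomic cyclic.
Import Order.TTheory GRing.Theory Num.Theory.
Set Implicit Arguments. Unset Strict Implicit. Unset Printing Implicit Defensive.
Local Open Scope ring_scope.

Section Cplx.
Variable R : realType.
Local Notation C := R[i].
Lemma ReD (x y : C) : complex.Re (x + y) = complex.Re x + complex.Re y.
Proof. by case: x => a b; case: y. Qed.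
Lemma ImD (x y : C) : complex.Im (x + y) = complex.Im x + complex.Im y.
Proof. by case: x => a b; case: y. Qed.
Lemma ReN (x : C) : complex.Re (- x) = - complex.Re x.
Proof. by case: x. Qed.
Lemma ReB (x y : C) : complex.Re (x - y) = complex.Re x - complex.Re y.
Proof. by rewrite ReD ReN. Qed.
Lemma ReM (x y : C) : complex.Re (x * y) = complex.Re x * complex.Re y - complex.Im x * complex.Im y.
Proof. by case: x => a b; case: y. Qed.
Lemma ImM (x y : C) : complex.Im (x * y) = complex.Re x * complex.Im y + complex.Im x * complex.Re y.
Proof. by case: x => a b; case: y. Qed.
Lemma ReJ (x : C) : complex.Re (x^*) = complex.Re x.
Proof. by case: x. Qed.
Lemma ImJ (x : C) : complex.Im (x^*) = - complex.Im x.
Proof. by case: x. Qed.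
Lemma cjD (a b : C) : (a + b)^* = a^* + b^*. Proof. exact: rmorphD. Qed.
Lemma cjM (a b : C) : (a * b)^* = a^* * b^*. Proof. exact: rmorphM. Qed.
Lemma cjN (a : C) : (- a)^* = - a^*. Proof. exact: rmorphN. Qed.
Lemma cjB (a b : C) : (a - b)^* = a^* - b^*. Proof. exact: rmorphB. Qed.
Lemma cjK (a : C) : (a^*)^* = a. Proof. exact: conjCK. Qed.
Lemma cj0 : (0 : C)^* = 0. Proof. exact: rmorph0. Qed.
Lemma cj1 : (1 : C)^* = 1. Proof. exact: rmorph1. Qed.
Lemma cjX (a : C) n : (a ^+ n)^* = (a^*) ^+ n. Proof. exact: rmorphXn. Qed.
Lemma cjV (a : C) : (a^-1)^* = (a^*)^-1. Proof. exact: fmorphV. Qed.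
Lemma ReC (r : R) : complex.Re (r%:C)%C = r. Proof. by []. Qed.
Lemma ImC (r : R) : complex.Im (r%:C)%C = 0. Proof. by []. Qed.
Lemma Re0 : complex.Re (0 : C) = 0. Proof. by []. Qed.
Lemma Re1 : complex.Re (1 : C) = 1. Proof. by []. Qed.
Lemma ReMC (r : R) (x : C) : complex.Re ((r%:C)%C * x) = r * complex.Re x.
Proof. by rewrite ReM ReC ImC mul0r subr0. Qed.
Lemma ImMC (r : R) (x : C) : complex.Im ((r%:C)%C * x) = r * complex.Im x.
Proof. by rewrite ImM ReC ImC mul0r addr0. Qed.
Lemma realCD (a b : R) : ((a + b)%:C)%C = (a%:C)%C + (b%:C)%C :> C.
Proof. by apply/eqP; rewrite eq_complex /= addr0 !eqxx. Qed.
Lemma realCM (a b : R) : ((a * b)%:C)%C = (a%:C)%C * (b%:C)%C :> C.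
Proof. by apply/eqP; rewrite eq_complex /= !mul0r !mulr0 subr0 addr0 !eqxx. Qed.
Lemma realCN (a : R) : ((- a)%:C)%C = - (a%:C)%C :> C.
Proof. by apply/eqP; rewrite eq_complex /= oppr0 !eqxx. Qed.
Lemma realCB (a b : R) : ((a - b)%:C)%C = (a%:C)%C - (b%:C)%C :> C.
Proof. by rewrite realCD realCN. Qed.
Lemma realC1 : ((1 : R)%:C)%C = 1 :> C. Proof. by []. Qed.
Lemma realC0 : ((0 : R)%:C)%C = 0 :> C. Proof. by []. Qed.
Lemma realCV (a : R) : ((a^-1)%:C)%C = (((a%:C)%C)^-1 : C).
Proof.
have [->|a0] := eqVneq a 0; first by rewrite invr0 realC0 invr0.
have ac : ((a%:C)%C : C) != 0 by apply/negP => /eqP [] /eqP; rewrite (negPf a0).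
by apply: (mulfI ac); rewrite -realCM mulfV // mulfV.
Qed.
Lemma realCJ (a : R) : ((a%:C)%C : C)^* = (a%:C)%C.
Proof. exact: conjc_real. Qed.
Lemma realCI (a b : R) : ((a%:C)%C = (b%:C)%C :> C) -> a = b.
Proof. by case. Qed.
Lemma ge0_realE (z : C) : 0 <= z -> z = ((complex.Re z)%:C)%C.
Proof.
move=> hz; apply/eqP; rewrite eq_complex /= eqxx /=.
by rewrite (ger0_Im hz).
Qed.
Lemma ge0_Re (z : C) : 0 <= z -> 0 <= complex.Re z.
Proof. by rewrite lecE => /andP[_]. Qed.
Lemma lecRR (a b : R) : ((a%:C)%C <= (b%:C)%C :> C) = (a <= b).
Proof. exact: lecR. Qed.

Definition cabs (z : C) : R := Num.sqrt (complex.Re z ^+ 2 + complex.Im z ^+ 2).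
Lemma cabs_ge0 z : 0 <= cabs z. Proof. exact: sqrtr_ge0. Qed.
Lemma normcE' (z : C) : `|z| = ((cabs z)%:C)%C.
Proof. by rewrite normc_def. Qed.
Lemma cabs2 z : cabs z ^+ 2 = complex.Re z ^+ 2 + complex.Im z ^+ 2.
Proof. by rewrite sqr_sqrtr // addr_ge0 // sqr_ge0. Qed.
Lemma cabs2E z : (((cabs z ^+ 2)%:C)%C : C) = z * z^*.
Proof. by rewrite -normCK normcE' realCM expr2. Qed.
Lemma cabsM a b : cabs (a * b) = cabs a * cabs b.
Proof. apply: realCI; rewrite realCM -!normcE'; exact: normrM. Qed.
Lemma cabsJ a : cabs (a^*) = cabs a.
Proof. by rewrite /cabs ReJ ImJ sqrrN. Qed.
Lemma cabsC (r : R) : cabs ((r%:C)%C) = `|r|.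
Proof. by rewrite /cabs /= expr0n /= addr0 sqrtr_sqr. Qed.
Lemma cabsD a b : cabs (a + b) <= cabs a + cabs b.
Proof. by rewrite -lecRR realCD -!normcE'; exact: ler_normD. Qed.
Lemma cabsN a : cabs (- a) = cabs a.
Proof. apply: realCI; rewrite -!normcE'; exact: normrN. Qed.
Lemma cabs_eq0 a : (cabs a == 0) = (a == 0).
Proof.
apply/idP/idP => [/eqP h|/eqP->]; last by rewrite /cabs /= expr0n /= addr0 sqrtr0.
by rewrite -normr_eq0 normcE' h.
Qed.
Lemma cabsX a n : cabs (a ^+ n) = cabs a ^+ n.
Proof. by elim: n => [|n IH]; rewrite ?expr0 ?cabsC ?normr1 // !exprS cabsM IH. Qed.
Lemma cabs1 : cabs 1 = 1. Proof. by rewrite -realC1 cabsC normr1. Qed.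
Lemma cabsV a : cabs (a^-1) = (cabs a)^-1.
Proof.
have [->|a0] := eqVneq a 0; first by rewrite invr0 -realC0 cabsC normr0 invr0.
apply: (@mulfI _ (cabs a)); first by rewrite cabs_eq0.
by rewrite -cabsM mulfV // ?cabs_eq0 // cabs1 mulfV // cabs_eq0.
Qed.
Lemma Re_le_cabs z : complex.Re z <= cabs z.
Proof.
apply: le_trans (ler_norm _) _; rewrite /cabs -sqrtr_sqr.
by rewrite ler_sqrt ?addr_ge0 ?sqr_ge0 // lerDl sqr_ge0.
Qed.
End Cplx.

Section IP.
Variable R : realType.
Local Notation C := R[i].
Variable V : lmodType C.
Variable ip : V -> V -> C.
Hypothesis hip : inner_product ip.

Lemma ipL a x y z : ip (a *: x + y) z = a * ip x z + ip y z.
Proof. by case: hip => h _ _ _; apply: h. Qed.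
Lemma ipC x y : ip y x = (ip x y)^*.
Proof. by case: hip => _ h _ _; apply: h. Qed.
Lemma ip_ge0 x : 0 <= ip x x.
Proof. by case: hip => _ _ h _; apply: h. Qed.
Lemma ip_eq0 x : ip x x = 0 -> x = 0.
Proof. by case: hip => _ _ _ h; apply: h. Qed.
Lemma ip0l z : ip 0 z = 0.
Proof.
have := ipL 1 0 0 z; rewrite scaler0 addr0 mul1r => /eqP h.
by apply/eqP; move: h; rewrite eq_sym -subr_eq0 addrK.
Qed.
Lemma ipDl x y z : ip (x + y) z = ip x z + ip y z.
Proof. by rewrite -{1}(scale1r x) ipL mul1r. Qed.
Lemma ipZl a x z : ip (a *: x) z = a * ip x z.
Proof. by rewrite -(addr0 (a *: x)) ipL ip0l addr0. Qed.
Lemma ipNl x z : ip (- x) z = - ip x z.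
Proof. by rewrite -scaleN1r ipZl mulN1r. Qed.
Lemma ipBl x y z : ip (x - y) z = ip x z - ip y z.
Proof. by rewrite ipDl ipNl. Qed.
Lemma ip0r z : ip z 0 = 0.
Proof. by rewrite ipC ip0l cj0. Qed.
Lemma ipDr x y z : ip z (x + y) = ip z x + ip z y.
Proof. by rewrite ipC ipDl cjD -!ipC. Qed.
Lemma ipZr a x z : ip z (a *: x) = a^* * ip z x.
Proof. by rewrite ipC ipZl cjM -ipC. Qed.
Lemma ipNr x z : ip z (- x) = - ip z x.
Proof. by rewrite -scaleN1r ipZr cjN cj1 mulN1r. Qed.
Lemma ipBr x y z : ip z (x - y) = ip z x - ip z y.
Proof. by rewrite ipDr ipNr. Qed.
Lemma ip_sumr (I : Type) (r : seq I) (F : I -> V) z :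
  ip z (\sum_(i <- r) F i) = \sum_(i <- r) ip z (F i).
Proof.
elim: r => [|a r IH]; first by rewrite !big_nil ip0r.
by rewrite !big_cons ipDr IH.
Qed.
Lemma ip_suml (I : Type) (r : seq I) (F : I -> V) z :
  ip (\sum_(i <- r) F i) z = \sum_(i <- r) ip (F i) z.
Proof.
elim: r => [|a r IH]; first by rewrite !big_nil ip0l.
by rewrite !big_cons ipDl IH.
Qed.

Definition nsq (x : V) : R := complex.Re (ip x x).
Lemma ipxxE x : ip x x = ((nsq x)%:C)%C.
Proof. exact: ge0_realE (ip_ge0 x). Qed.
Lemma nsq_ge0 x : 0 <= nsq x.
Proof. exact: ge0_Re (ip_ge0 x). Qed.
Lemma nsq_eq0 x : nsq x = 0 -> x = 0.
Proof. by move=> h; apply: ip_eq0; rewrite ipxxE h. Qed.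
Lemma nsq0 : nsq 0 = 0.
Proof. by rewrite /nsq ip0l. Qed.
Lemma Re_ipC x y : complex.Re (ip y x) = complex.Re (ip x y).
Proof. by rewrite ipC ReJ. Qed.
Lemma nsqD x y : nsq (x + y) = nsq x + nsq y + 2 * complex.Re (ip x y).
Proof.
rewrite /nsq ipDl !ipDr !ReD (Re_ipC x y).
by rewrite mulr2n mulrDl mul1r; lra.
Qed.
Lemma nsqN x : nsq (- x) = nsq x.
Proof. by rewrite /nsq ipNl ipNr opprK. Qed.
Lemma nsqB x y : nsq (x - y) = nsq x + nsq y - 2 * complex.Re (ip x y).
Proof. by rewrite nsqD nsqN ipNr ReN mulrN. Qed.
Lemma nsqZ a x : nsq (a *: x) = cabs a ^+ 2 * nsq x.
Proof.
rewrite /nsq ipZl ipZr mulrA ipxxE -cabs2E -realCM; by [].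
Qed.
Lemma nsqZr (r : R) x : nsq ((r%:C)%C *: x) = r ^+ 2 * nsq x.
Proof. by rewrite nsqZ cabsC real_normK // num_real. Qed.

Local Notation N := (hnorm ip).
Lemma hnormE x : N x = Num.sqrt (nsq x). Proof. by []. Qed.
Lemma hnorm_ge0 x : 0 <= N x. Proof. exact: sqrtr_ge0. Qed.
Lemma hnorm2 x : N x ^+ 2 = nsq x.
Proof. by rewrite sqr_sqrtr // nsq_ge0. Qed.
Lemma hnorm_eq0 x : N x = 0 -> x = 0.
Proof. by move=> h; apply: nsq_eq0; rewrite -hnorm2 h expr0n. Qed.
Lemma hnorm0 : N 0 = 0.
Proof. by rewrite hnormE nsq0 sqrtr0. Qed.
Lemma hnorm_gt0 x : x != 0 -> 0 < N x.
Proof.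
move=> x0; rewrite lt_neqAle hnorm_ge0 andbT; apply/eqP => h.
by move/eqP: x0; apply; apply: hnorm_eq0.
Qed.
Lemma hnormZ a x : N (a *: x) = cabs a * N x.
Proof.
rewrite !hnormE nsqZ sqrtrM ?sqr_ge0 // sqrtr_sqr ger0_norm //; exact: cabs_ge0.
Qed.
Lemma hnormZr (r : R) x : N ((r%:C)%C *: x) = `|r| * N x.
Proof. by rewrite hnormZ cabsC. Qed.
Lemma hnormN x : N (- x) = N x.
Proof. by rewrite hnormE nsqN. Qed.
Lemma hnormB_sym x y : N (x - y) = N (y - x).
Proof. by rewrite -hnormN opprB. Qed.
Lemma sqr_le_sqr (a b : R) : 0 <= b -> a ^+ 2 <= b ^+ 2 -> a <= b.
Proof.
move=> b0 h; have [a0|a0] := leP 0 a; first by rewrite -(ler_pXn2r (n:=2)).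
by apply: le_trans b0; apply: ltW.
Qed.

Lemma ReCS x y : complex.Re (ip x y) <= N x * N y.
Proof.
have [->|x0] := eqVneq x 0; first by rewrite ip0l hnorm0 mul0r.
have [->|y0] := eqVneq y 0; first by rewrite ip0r hnorm0 mulr0.
have := nsq_ge0 (((N y)%:C)%C *: x - ((N x)%:C)%C *: y).
rewrite nsqB !nsqZr ipZl ipZr realCJ mulrA -realCM ReMC -!hnorm2.
have hx := hnorm_gt0 x0; have hy := hnorm_gt0 y0.
set a := N x; set b := N y; set c := complex.Re _ => h.
have hab : 0 < a * b by rewrite mulr_gt0.
have h2 : 0 <= (a * b) * (a * b - c) by nra.
by rewrite pmulr_rge0 // subr_ge0 in h2.
Qed.

Lemma CS x y : cabs (ip x y) <= N x * N y.
Proof.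
set c := ip x y.
have [c0|c0] := eqVneq c 0; first by rewrite c0 -realC0 cabsC normr0 mulr_ge0 // hnorm_ge0.
pose a := c^* / ((cabs c)%:C)%C.
have ca : cabs c != 0 by rewrite cabs_eq0.
have hca : cabs a = 1.
  by rewrite /a cabsM cabsV cabsJ cabsC ger0_norm ?cabs_ge0 // mulfV.
have := ReCS (a *: x) y; rewrite ipZl hnormZ hca mul1r.
suff -> : a * ip x y = ((cabs c)%:C)%C by [].
rewrite /a -/c mulrAC [c^* * c]mulrC -cabs2E expr2.
rewrite realCM -mulrA mulfV ?mulr1 //.
by apply/eqP => /realCI /eqP; rewrite (negPf ca).
Qed.

Lemma hnormD x y : N (x + y) <= N x + N y.
Proof.
apply: sqr_le_sqr; first by rewrite addr_ge0 // hnorm_ge0.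
rewrite hnorm2 nsqD -!hnorm2 sqrrD.
have := ReCS x y; nra.
Qed.
Lemma hnormB x y : N (x - y) <= N x + N y.
Proof. by rewrite -(hnormN y) hnormD. Qed.
Lemma hnorm_tri x y z : N (x - z) <= N (x - y) + N (y - z).
Proof. by have := hnormD (x - y) (y - z); rewrite addrA subrK. Qed.
Lemma hnorm_rev x y : N x - N y <= N (x - y).
Proof. rewrite lerBlDr; have := hnormD (x - y) y; by rewrite subrK. Qed.

Lemma ip_ext u v : (forall x, ip x u = ip x v) -> u = v.
Proof.
move=> h; apply/eqP; rewrite -subr_eq0; apply/eqP; apply: ip_eq0.
by rewrite ipBr h subrr.
Qed.
Lemma ip_extl u v : (forall x, ip u x = ip v x) -> u = v.
Proof. move=> h; apply: ip_ext => x; by rewrite ipC h -ipC. Qed.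
End IP.

Lemma exists_inv (R : realType) (d : R) : 0 < d -> exists k : nat, k.+1%:R^-1 < d.
Proof. by move=> /ltr_add_invr [k]; rewrite add0r; exists k. Qed.

Lemma inv_mono (R : realType) (k m : nat) : (k <= m)%N -> m.+1%:R^-1 <= k.+1%:R^-1 :> R.
Proof. by move=> h; rewrite lef_pV2 ?posrE ?ltr0Sn // ler_nat ltnS. Qed.

Lemma inv_gt0 (R : realType) (k : nat) : 0 < k.+1%:R^-1 :> R.
Proof. by rewrite invr_gt0 ltr0Sn. Qed.

Lemma sqr_lt_sqr (R : realType) (a b : R) : 0 <= b -> a ^+ 2 < b ^+ 2 -> a < b.
Proof. move=> b0 h; rewrite ltNge; apply/negP => h2; nra. Qed.

Lemma le_eps (R : realType) (x y : R) : (forall e, 0 < e -> x <= y + e) -> x <= y.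
Proof. by move=> h; apply/ler_addgt0Pr. Qed.

Section Topo.
Variable R : realType.
Local Notation C := R[i].
Variable V : lmodType C.
Variable ip : V -> V -> C.
Hypothesis hip : inner_product ip.
Local Notation N := (hnorm ip).

Lemma cvg_unique u l1 l2 : cvg_to ip u l1 -> cvg_to ip u l2 -> l1 = l2.
Proof.
move=> h1 h2; apply/eqP; rewrite -subr_eq0; apply/eqP; apply: (hnorm_eq0 hip); apply/eqP; rewrite eq_le hnorm_ge0 andbT.
apply: le_eps => e e0; rewrite add0r.
have e2 : 0 < e / 2 by rewrite divr_gt0.
have [N1 H1] := h1 _ e2; have [N2 H2] := h2 _ e2.
have := H1 (maxn N1 N2) (leq_maxl _ _); have := H2 (maxn N1 N2) (leq_maxr _ _).
set v := u _ => a b.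
have := hnorm_tri hip l1 v l2; rewrite (hnormB_sym hip l1 v).
move=> h; apply: (le_trans h); apply: ltW; lra.
Qed.

Lemma cvg_const l : cvg_to ip (fun _ => l) l.
Proof. by move=> e e0; exists 0%N => n _; rewrite subrr (hnorm0 hip). Qed.

Lemma bounded_pos T : bounded_op ip T -> exists2 M : R, 0 < M & forall x, N (T x) <= M * N x.
Proof.
case=> _ [M hM]; exists (`|M| + 1); first by rewrite ltr_wpDl.
move=> x; apply: le_trans (hM x) _; apply: ler_wpM2r; first exact: hnorm_ge0.
by apply: le_trans (ler_norm M) _; rewrite lerDl.
Qed.

Section Lin.
Variable T : V -> V.
Hypothesis hT : lin_op T.
Lemma lin0 : T 0 = 0.
Proof.
have := hT 1 0 0; rewrite scaler0 addr0 scale1r => /eqP.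
by rewrite eq_sym -subr_eq0 addrK => /eqP.
Qed.
Lemma linD x y : T (x + y) = T x + T y.
Proof. by rewrite -{1}(scale1r x) hT scale1r. Qed.
Lemma linZ a x : T (a *: x) = a *: T x.
Proof. by rewrite -(addr0 (a *: x)) hT lin0 addr0. Qed.
Lemma linN x : T (- x) = - T x.
Proof. by rewrite -scaleN1r linZ scaleN1r. Qed.
Lemma linB x y : T (x - y) = T x - T y.
Proof. by rewrite linD linN. Qed.
Lemma lin_sum (I : Type) (r : seq I) (F : I -> V) :
  T (\sum_(i <- r) F i) = \sum_(i <- r) T (F i).
Proof.
elim: r => [|a r IH]; first by rewrite !big_nil lin0.
by rewrite !big_cons linD IH.
Qed.
End Lin.

Lemma bounded_cvg T u l : bounded_op ip T -> cvg_to ip u l -> cvg_to ip (T \o u) (T l).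
Proof.
move=> hT hu; have [M M0 hM] := bounded_pos hT.
move=> e e0; have [K hK] := hu (e / M) (divr_gt0 e0 M0).
exists K => n hn /=; rewrite -(linB hT.1).
apply: le_lt_trans (hM _) _; rewrite -ltr_pdivlMl //; rewrite mulrC; exact: hK.
Qed.

Lemma cvg_norm_le u l (b : R) : cvg_to ip u l -> (forall n, N (u n) <= b) -> N l <= b.
Proof.
move=> hu hb; apply: le_eps => e e0.
have [K hK] := hu e e0; have := hK K (leqnn K).
have := hnorm_rev hip l (u K); rewrite (hnormB_sym hip l (u K)) => h1 h2.
have := hb K; lra.
Qed.

Lemma cauchy_of u (c : nat -> R) :
  (forall e, 0 < e -> exists K, forall k, (K <= k)%N -> c k < e) ->
  (forall m n, N (u m - u n) <= c m + c n) -> cauchy_seq ip u.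
Proof.
move=> hc hu e e0; have [K hK] := hc (e / 2) (divr_gt0 e0 (ltr0Sn _ 1)).
exists K => m n hm hn; apply: le_lt_trans (hu m n) _.
have := hK m hm; have := hK n hn; lra.
Qed.
End Topo.

Section Proj.
Variable R : realType.
Local Notation C := R[i].
Variable V : lmodType C.
Variable ip : V -> V -> C.
Hypothesis hip : inner_product ip.
Hypothesis hcomp : complete ip.
Local Notation N := (hnorm ip).

Lemma cauchy_of2 u (c : nat -> R) :
  (forall e, 0 < e -> exists K, forall k, (K <= k)%N -> c k < e) ->
  (forall m n, nsq ip (u m - u n) <= c m + c n) -> cauchy_seq ip u.
Proof.
move=> hc hu e e0.
have e2 : 0 < e ^+ 2 / 2 by rewrite divr_gt0 // exprn_gt0.
have [K hK] := hc _ e2.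
exists K => m n hm hn.
have h : N (u m - u n) ^+ 2 < e ^+ 2.
  rewrite (hnorm2 hip); apply: le_lt_trans (hu m n) _.
  have := hK m hm; have := hK n hn; lra.
by apply: sqr_lt_sqr h; apply: ltW.
Qed.

Lemma parallelogram a b : nsq ip (a + b) + nsq ip (a - b) = 2 * nsq ip a + 2 * nsq ip b.
Proof. rewrite (nsqD hip) (nsqB hip); lra. Qed.

Variable P : V -> Prop.
Hypothesis hP : closed_subspace ip P.
Lemma P0 : P 0. Proof. by case: hP. Qed.
Lemma PL a x y : P x -> P y -> P (a *: x + y). Proof. by case: hP => _ [h _]; apply: h. Qed.
Lemma PD x y : P x -> P y -> P (x + y). Proof. by move=> hx hy; rewrite -(scale1r x); apply: PL. Qed.
Lemma PZ a x : P x -> P (a *: x). Proof. by move=> hx; rewrite -(addr0 (a *: x)); apply: PL => //; apply: P0. Qed.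
Lemma PN x : P x -> P (- x). Proof. by move=> hx; rewrite -scaleN1r; apply: PZ. Qed.
Lemma PB x y : P x -> P y -> P (x - y). Proof. by move=> hx hy; apply: PD => //; apply: PN. Qed.
Lemma Plim u l : (forall n, P (u n)) -> cvg_to ip u l -> P l.
Proof. by case: hP => _ [_ h]; apply: h. Qed.

Lemma orth_of_min z : (forall n t, P n -> nsq ip z <= nsq ip (z - t *: n)) ->
  forall n, P n -> ip z n = 0.
Proof.
move=> hmin n Pn.
have [->|n0] := eqVneq n 0; first by rewrite (ip0r hip).
set c := ip z n; set m := nsq ip n.
have m0 : 0 < m.
  rewrite /m lt_neqAle nsq_ge0 // andbT; apply/eqP => h.
  by move/eqP: n0; apply; apply: (nsq_eq0 hip); rewrite -h.
pose t := c * ((m^-1)%:C)%C.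
have h := hmin n t Pn.
rewrite (nsqB hip) (nsqZ hip) (ipZr hip) -/m -/c in h.
have e1 : t^* * c = (((cabs c ^+ 2) * m^-1)%:C)%C.
  rewrite /t cjM realCJ mulrAC [c^* * c]mulrC -cabs2E realCM //.
have e2 : cabs t = cabs c * m^-1.
  by rewrite /t cabsM cabsC ger0_norm // invr_ge0 ltW.
rewrite e1 ReC e2 in h.
have h2 : cabs c ^+ 2 * m^-1 <= 0.
  have e : (cabs c * m^-1) ^+ 2 * m = cabs c ^+ 2 * m^-1.
    by field; rewrite gt_eqF.
  rewrite e in h; lra.
have h3 : cabs c ^+ 2 <= 0.
  have -> : cabs c ^+ 2 = (cabs c ^+ 2 * m^-1) * m by field; rewrite gt_eqF.
  nra.
have : cabs c = 0.
  apply/eqP; rewrite -sqrf_eq0 eq_le h3 sqr_ge0 //.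
by move/eqP; rewrite cabs_eq0 => /eqP.
Qed.

Theorem proj w : exists2 p, P p & forall n, P n -> ip (w - p) n = 0.
Proof.
pose D : set R := fun r => exists n, P n /\ r = N (w - n).
have D0 : D (N (w - 0)) by exists 0; split => //; exact: P0.
have lb0 : lbound D 0 by move=> r [n [_ ->]]; exact: hnorm_ge0.
have hinf : has_inf D by split; [exists (N (w - 0)) | exists 0].
set d := inf D.
have d0 : 0 <= d by apply: lb_le_inf => //; exists (N (w - 0)).
have dle : forall n, P n -> d <= N (w - n).
  by move=> n Pn; apply: (ge_inf hinf.2); exists n.
pose e (k : nat) : R := k.+1%:R^-1.
have e0 : forall k, 0 < e k by move=> k; apply: inv_gt0.
have e1 : forall k, e k <= 1 by move=> k; rewrite /e invr_le1 ?ler1n ?unitfE ?pnatr_eq0 // ltr0Sn.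
have ex : forall k : nat, exists n, P n /\ N (w - n) < d + e k.
  move=> k; have [r [n [Pn ->]] hr] := inf_adherent (e0 k) hinf.
  by exists n.
have [f hf] := choice ex.
have cauchy : cauchy_seq ip f.
  apply: (@cauchy_of2 _ (fun k => 4 * (d + 1) * e k)).
    move=> eps eps0.
    have h4 : 0 < 4 * (d + 1) by rewrite mulr_gt0 // ltr_wpDl.
    have [K hK] := exists_inv (divr_gt0 eps0 h4).
    exists K => k hk.
    have : e k < eps / (4 * (d + 1)) by apply: le_lt_trans hK; exact: inv_mono.
    by rewrite ltr_pdivlMr // mulrC.
  move=> k m.
  have [Pk hk] := hf k; have [Pm hm] := hf m.
  have := parallelogram (w - f k) (w - f m).
  have -> : w - f k - (w - f m) = f m - f k by rewrite opprD opprK addrACA subrr add0r addrC.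
  pose mid := ((2^-1)%:C)%C *: (f k + f m).
  have Pmid : P mid by apply: PZ; apply: PD.
  have -> : w - f k + (w - f m) = ((2%:R)%:C)%C *: (w - mid).
    rewrite /mid scalerBr scalerA -realCM mulfV ?pnatr_eq0 // realC1 scale1r.
    have -> : ((2%:R : R)%:C)%C = 1 + 1 :> C by apply/eqP; rewrite eq_complex /= addr0 !eqxx.
    by rewrite scalerDl scale1r addrACA opprD.
  rewrite (nsqZr hip) -!(hnorm2 hip) (hnormB_sym hip (f m)).
  have hmid := dle _ Pmid.
  have hk0 := dle _ Pk; have hm0 := dle _ Pm.
  have := e1 k; have := e1 m; have := e0 k; have := e0 m.
  set a := N (w - f k); set b := N (w - f m); set c := N (w - mid); set g := N (f k - f m).
  move=> em0 ek0 em1 ek1 hpar.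
  have ha : a ^+ 2 <= (d + e k) ^+ 2.
    have a0 : 0 <= a by apply: hnorm_ge0.
    by rewrite ler_pXn2r ?nnegrE ?addr_ge0 // ?ltW.
  have hb : b ^+ 2 <= (d + e m) ^+ 2.
    have b0 : 0 <= b by apply: hnorm_ge0.
    by rewrite ler_pXn2r ?nnegrE ?addr_ge0 // ?ltW.
  have hc : d ^+ 2 <= c ^+ 2 by rewrite ler_pXn2r ?nnegrE // (le_trans d0).
  have : e k ^+ 2 <= e k by rewrite expr2 ler_piMl // ltW.
  have : e m ^+ 2 <= e m by rewrite expr2 ler_piMl // ltW.
  have : d * e k >= 0 by rewrite mulr_ge0 // ltW.
  have : d * e m >= 0 by rewrite mulr_ge0 // ltW.
  rewrite expr2 in hpar. nra.
have [p hp] := hcomp cauchy.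
have Pp : P p by apply: (Plim (u := f)) hp => n; case: (hf n).
exists p => //.
have hd : N (w - p) <= d.
  apply: le_eps => eps eps0.
  have eps2 : 0 < eps / 2 by rewrite divr_gt0.
  have [K1 hK1] := hp _ eps2.
  have [K2 hK2] := exists_inv eps2.
  pose k := maxn K1 K2.
  have h1 := hK1 k (leq_maxl _ _).
  have h2 : e k < eps / 2 by apply: le_lt_trans hK2; apply: inv_mono; exact: leq_maxr.
  have [_ h3] := hf k.
  have := hnorm_tri hip w (f k) p.
  move: h1 h2 h3; set a := N (f k - p); set b := N (w - f k); set c := N (w - p).
  lra.
apply: orth_of_min => n t Pn.
have Pq : P (p + t *: n) by apply: PD => //; apply: PZ.
have := dle _ Pq; rewrite opprD addrA => h.
rewrite -!(hnorm2 hip); rewrite ler_pXn2r ?nnegrE ?hnorm_ge0 //.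
exact: le_trans hd h.
Qed.
End Proj.

Section Adj.
Variable R : realType.
Local Notation C := R[i].
Variable V : lmodType C.
Variable ip : V -> V -> C.
Hypothesis hip : inner_product ip.
Hypothesis hcomp : complete ip.
Local Notation N := (hnorm ip).

Lemma cabs_le_eps (c : C) : (forall e : R, 0 < e -> cabs c <= e) -> c = 0.
Proof.
move=> h; apply/eqP; rewrite -cabs_eq0 eq_le cabs_ge0 andbT.
by apply: le_eps => e e0; rewrite add0r; apply: h.
Qed.

Variable T : V -> V.
Hypothesis hT : bounded_op ip T.

Lemma riesz_y y : exists s, forall x, ip (T x) y = ip x s.
Proof.
pose f x := ip (T x) y.
have hl := hT.1.
case: (pselect (forall x, f x = 0)) => [h|h].
  by exists 0 => x; rewrite (ip0r hip); apply: h.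
have [w hw] : exists w, f w <> 0.
  by apply: contrapT => hn; apply: h => x; apply: contrapT => hx; apply: hn; exists x.
pose P x := f x = 0.
have hP : closed_subspace ip P.
  split; first by rewrite /P /f (lin0 hl) (ip0l hip).
  split.
    move=> a x x' hx hx'; rewrite /P /f in hx hx' *.
    by rewrite hl (ipDl hip) (ipZl hip) hx hx' mulr0 addr0.
  move=> u l hu hcv; apply: cabs_le_eps => e e0.
  have [M M0 hM] := bounded_pos hT.
  pose d := e / (M * (N y + 1)).
  have hN1 : 0 < N y + 1 by rewrite ltr_wpDl // hnorm_ge0.
  have d0 : 0 < d by rewrite divr_gt0 // mulr_gt0.
  have [K hK] := hcv d d0.
  have := hK K (leqnn K).
  have -> : f l = ip (T l - T (u K)) y.
    by rewrite (ipBl hip) -/(f l) -/(f (u K)) (hu K) subr0.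
  move=> hd.
  apply: le_trans (CS hip _ _) _.
  rewrite -(linB hl).
  apply: le_trans (_ : M * N (u K - l) * N y <= _).
    by apply: ler_wpM2r; [exact: hnorm_ge0 | rewrite (hnormB_sym hip); exact: hM].
  have : M * N (u K - l) <= M * d by apply: ler_wpM2l; [exact: ltW | exact: ltW].
  have -> : M * d = e / (N y + 1) by rewrite /d; field; rewrite ?gt_eqF ?M0 ?hN1.
  move=> h1.
  apply: le_trans (_ : e / (N y + 1) * N y <= _).
    by apply: ler_wpM2r => //; exact: hnorm_ge0.
  rewrite mulrAC ler_pdivrMr //; have := hnorm_ge0 ip y; nra.
have [p Pp hp] := proj hip hcomp hP w.
set z := w - p.
have fz : f z = f w by rewrite /f (linB hl) (ipBl hip) -/(f w) -/(f p) Pp subr0.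
have z0 : z != 0 by apply/eqP => hz; apply: hw; rewrite -fz hz /f (lin0 hl) (ip0l hip).
have m0 : nsq ip z != 0.
  by apply/eqP => hm; move/eqP: z0; apply; apply: (nsq_eq0 hip).
exists (((f z)^* / ((nsq ip z)%:C)%C) *: z) => x.
pose u := f x *: z - f z *: x.
have Pu : P u.
  by rewrite /P /f (linB hl) !(linZ hl) (ipBl hip) !(ipZl hip) -/(f x) -/(f z) mulrC subrr.
have hu : ip u z = 0 by rewrite (ipC hip) hp // cj0.
rewrite /u (ipBl hip) !(ipZl hip) (ipxxE hip) in hu.
rewrite (ipZr hip) cjM cjK cjV realCJ -/(f x).
move/eqP: hu; rewrite subr_eq0 => /eqP hu.
rewrite mulrAC -hu mulfK //.
by apply/eqP => /realCI /eqP; rewrite (negPf m0).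
Qed.

Lemma adj_exists : exists S, is_adjoint ip T S.
Proof.
have [S hS] := choice riesz_y.
exists S; split; last by [].
have hl : lin_op S.
  move=> a x y; apply: (ip_ext hip) => v.
  by rewrite -hS (ipDr hip) (ipZr hip) !hS (ipDr hip) (ipZr hip).
split => //.
have [M M0 hM] := bounded_pos hT.
exists M => y.
have h : N (S y) ^+ 2 <= M * N (S y) * N y.
  rewrite (hnorm2 hip) /nsq -hS.
  apply: le_trans (ReCS hip _ _) _.
  by apply: ler_wpM2r; [exact: hnorm_ge0 | exact: hM].
have a0 := hnorm_ge0 ip (S y); have b0 := hnorm_ge0 ip y.
have [ha|ha] := eqVneq (N (S y)) 0; first by rewrite ha mulr_ge0 // ltW.
have ap : 0 < N (S y) by rewrite lt_neqAle eq_sym ha a0.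
by rewrite expr2 mulrAC ler_pM2r in h.
Qed.

Lemma adjP : is_adjoint ip T (adj ip T).
Proof.
rewrite /adj; case: pselect => [h|h] /=; first exact: (proj2_sig (cid h)).
by exfalso; apply: h; exact: adj_exists.
Qed.

Lemma adj_ip x y : ip (T x) y = ip x (adj ip T y).
Proof. by case: adjP => _; apply. Qed.
Lemma adj_ip' x y : ip (adj ip T x) y = ip x (T y).
Proof. by rewrite (ipC hip) -adj_ip -(ipC hip). Qed.
Lemma adj_bounded : bounded_op ip (adj ip T).
Proof. by case: adjP. Qed.
Lemma adj_unique S : (forall x y, ip (T x) y = ip x (S y)) -> forall y, adj ip T y = S y.
Proof. by move=> h y; apply: (ip_ext hip) => x; rewrite -adj_ip h. Qed.
End Adj.

Section Inv.
Variable R : realType.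
Variable V : lmodType R[i].
Variable ip : V -> V -> R[i].
Lemma inv_op_eq A S : is_inverse ip A S -> forall y, inv_op ip A y = S y.
Proof.
move=> hS y; rewrite /inv_op; case: pselect => [h|h] /=; last first.
  by exfalso; apply: h; exists S.
case: (proj2_sig (cid h)) => _ [h1 _].
case: hS => _ [_ h2].
by rewrite -{1}(h2 y) h1.
Qed.
End Inv.

Section Part2.
Variable R : realType.
Local Notation C := R[i].
Variable V : lmodType C.
Variable ip : V -> V -> C.
Hypothesis hip : inner_product ip.
Hypothesis hcomp : complete ip.
Local Notation N := (hnorm ip).

Lemma cvg_cauchy u l : cvg_to ip u l -> cauchy_seq ip u.
Proof.
move=> h e e0; have [K hK] := h (e / 2) (divr_gt0 e0 (ltr0Sn _ 1)).
exists K => m n hm hn.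
have := hnorm_tri hip (u m) l (u n); rewrite (hnormB_sym hip l).
have := hK m hm; have := hK n hn; lra.
Qed.

Lemma ap_of (T : V -> V) (lam : C) : lin_op T ->
  (forall e, 0 < e -> exists x, x != 0 /\ N (T x - lam *: x) < e * N x) ->
  ap_spectrum ip T lam.
Proof.
move=> hl h e e0; have [x [x0 hx]] := h e e0.
have nx := hnorm_gt0 hip x0.
pose x' := (((N x)^-1)%:C)%C *: x.
exists x'; split.
  by rewrite /x' (hnormZr hip) ger0_norm ?invr_ge0 ?ltW // mulVf // gt_eqF.
rewrite /x' (linZ hl) scalerA mulrC -scalerA -scalerBr (hnormZr hip).
rewrite ger0_norm ?invr_ge0 ?ltW // mulrC ltr_pdivrMr //.
Qed.

Lemma not_ap_bb (T : V -> V) (lam : C) : lin_op T -> ~ ap_spectrum ip T lam ->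
  exists2 e, 0 < e & forall x, e * N x <= N (T x - lam *: x).
Proof.
move=> hl hn; apply: contrapT => hc; apply: hn; apply: ap_of => // e e0.
apply: contrapT => hx; apply: hc; exists e => // x.
rewrite leNgt; apply/negP => hlt; apply: hx; exists x; split => //.
apply/eqP => x0; move: hlt; rewrite x0 (hnorm0 hip) mulr0 scaler0 subr0 (lin0 hl) (hnorm0 hip).
by rewrite ltxx.
Qed.

Variable T : V -> V.
Hypothesis hT : bounded_op ip T.
Hypothesis hap : forall lam : C, ap_spectrum ip T lam -> `|lam| = 1.

Lemma bb0 : exists2 e, 0 < e & forall x, e * N x <= N (T x).
Proof.
have hn : ~ ap_spectrum ip T 0.
  by move/hap/eqP; rewrite normr0 eq_sym oner_eq0.
have [e e0 he] := not_ap_bb hT.1 hn.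
by exists e => // x; have := he x; rewrite scale0r subr0.
Qed.

Theorem part2 : analytic T -> completely_non_normal ip T.
Proof.
move=> han M hM [hMT hMA] hnorm.
have hl := hT.1.
have [e e0 he] := bb0.
pose Q u := exists x, M x /\ u = T x.
have hQ : closed_subspace ip Q.
  split; first by exists 0; split; [exact: (P0 hM) | rewrite (lin0 hl)].
  split.
    move=> a u v [x [Mx ->]] [x' [Mx' ->]].
    by exists (a *: x + x'); split; [exact: (PL hM) | rewrite hl].
  move=> u l hu hcv.
  have [xs hxs] := @choice _ _ (fun n x => M x /\ u n = T x) hu.
  have cx : cauchy_seq ip xs.
    move=> eps eps0.
    have [K hK] := cvg_cauchy hcv (mulr_gt0 eps0 e0).
    exists K => m n hm hn.
    have := hK m n hm hn; case: (hxs m) => _ ->; case: (hxs n) => _ ->.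
    rewrite -(linB hl) => h.
    have := he (xs m - xs n); rewrite mulrC => h2.
    by rewrite -(ltr_pM2r e0); apply: le_lt_trans h2 h.
  have [x hx] := hcomp cx.
  exists x; split; first by apply: (Plim hM) hx => n; case: (hxs n).
  have h1 := bounded_cvg hT hx.
  apply: (cvg_unique hip hcv); move=> eps eps0; have [K hK] := h1 eps eps0.
  by exists K => n hn; case: (hxs n) => _ ->; apply: hK.
have surj : forall y, M y -> exists x, M x /\ y = T x.
  move=> y My.
  have [p Qp hp] := proj hip hcomp hQ y.
  case: (Qp) => x0 [Mx0 px0].
  set z := y - p.
  have Mz : M z by apply: (PB hM) => //; rewrite px0; apply: hMT.
  have hz : adj ip T z = 0.
    have Ma := hMA _ Mz.
    apply: (nsq_eq0 hip); rewrite /nsq -(adj_ip hip hcomp hT) (ipC hip) hp ?cj0 //.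
    by exists (adj ip T z).
  have hTz : T z = 0.
    apply: (nsq_eq0 hip); rewrite /nsq (adj_ip hip hcomp hT) hnorm // hz (lin0 hl) (ip0r hip).
    by [].
  have z0 : z = 0.
    apply: (hnorm_eq0 hip); apply/eqP; rewrite eq_le hnorm_ge0 andbT.
    have := he z; rewrite hTz (hnorm0 hip) => h.
    by rewrite -(pmulr_rle0 _ e0).
  exists x0; split => //.
  by rewrite -px0; apply/eqP; rewrite -subr_eq0 -/z z0.
move=> y My; apply: han => n.
suff : exists x, M x /\ y = iter n T x by case=> x [_ ->]; exists x.
elim: n => [|n [x [Mx ->]]]; first by exists y.
have [x' [Mx' ->]] := surj x Mx.
by exists x'; split => //; rewrite iterSr.
Qed.
End Part2.

Section Roots.
Variable R : realType.
Local Notation C := R[i].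

Lemma prim_root_exists n : (n > 0)%N -> exists z : C, n.-primitive_root z.
Proof.
pose p : {poly C} := 'X^n - 1; have [r Dp] := closed_field_poly_normal p.
move=> n_gt0; rewrite (monicP _) ?monicXnsubC // scale1r in Dp.
have rn1: all n.-unity_root r by apply/allP=> z; rewrite -root_prod_XsubC -Dp.
have sz_r: (n < (size r).+1)%N.
  by rewrite -(size_prod_XsubC r id) -Dp size_XnsubC.
have [|z] := hasP (cyclic.has_prim_root n_gt0 rn1 _ sz_r); last by exists z.
rewrite -separable.separable_prod_XsubC -Dp cyclotomic.separable_Xn_sub_1 //.
by rewrite pnatr_eq0 -lt0n.
Qed.
End Roots.

Section Fourier.
Variable R : realType.
Local Notation C := R[i].

Lemma geom_sum0 (z : C) K : z ^+ K = 1 -> z != 1 -> \sum_(j < K) z ^+ j = 0.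
Proof.
move=> hK z1; have := subrX1 z K; rewrite hK subrr => /esym/eqP.
by rewrite mulf_eq0 subr_eq0 (negPf z1) /= => /eqP.
Qed.

Lemma root_unit_cabs (w : C) K : (0 < K)%N -> w ^+ K = 1 -> cabs w = 1.
Proof.
move=> K0 hw; have : cabs w ^+ K == 1 by rewrite -cabsX hw cabs1.
by rewrite pexprn_eq1 ?cabs_ge0 // eqn0Ngt K0 /= => /eqP.
Qed.

Lemma cabs1_conj (w : C) : cabs w = 1 -> w^* * w = 1.
Proof. by move=> h; rewrite mulrC -cabs2E h expr1n. Qed.

Variable V : lmodType C.
Variable ip : V -> V -> C.
Hypothesis hip : inner_product ip.

Lemma parseval K (w : C) (v : 'I_K -> V) : K.-primitive_root w ->
  \sum_(j < K) ip (\sum_(k < K) ((w ^+ j) ^+ k) *: v k) (\sum_(l < K) ((w ^+ j) ^+ l) *: v l)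
  = K%:R * \sum_(k < K) ip (v k) (v k).
Proof.
move=> pw.
have K0 := prim_order_gt0 pw.
have cw : cabs w = 1 by apply: root_unit_cabs K0 (prim_expr_order pw).
have e1 : forall j, ip (\sum_(k < K) ((w ^+ j) ^+ k) *: v k) (\sum_(l < K) ((w ^+ j) ^+ l) *: v l)
   = \sum_(k < K) \sum_(l < K) (((w ^+ k) * (w ^+ l)^*) ^+ j * ip (v k) (v l)).
  move=> j; rewrite (ip_suml hip); apply: eq_bigr => k _.
  rewrite (ipZl hip) (ip_sumr hip) mulr_sumr; apply: eq_bigr => l _.
  rewrite (ipZr hip) mulrA; congr (_ * _).
  by rewrite exprMn -cjX -!exprM [(j * k)%N]mulnC [(j * l)%N]mulnC.
under eq_bigr => j _ do rewrite e1.
rewrite exchange_big /= mulr_sumr; apply: eq_bigr => k _.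
rewrite exchange_big /=.
rewrite (bigD1 k) //= [X in _ + X]big1 ?addr0; last first.
  move=> l lk; rewrite -mulr_suml geom_sum0 ?mul0r //.
    have h1 : forall m, (w ^+ m) ^+ K = 1 by move=> m; rewrite exprAC (prim_expr_order pw) expr1n.
    by rewrite exprMn -cjX !h1 cj1 mulr1.
  apply/eqP => h.
  have : w ^+ k = w ^+ l.
    have hl : (w ^+ l)^* * w ^+ l = 1 by apply: cabs1_conj; rewrite cabsX cw expr1n.
    by rewrite -[w ^+ k]mulr1 -hl mulrA h mul1r.
  move/eqP; rewrite (eq_prim_root_expr pw) !modn_small ?ltn_ord // => /eqP hkl.
  by move/eqP: lk; apply; apply: val_inj.
rewrite -mulr_suml.
have -> : w ^+ k * (w ^+ k)^* = 1 by rewrite mulrC; apply: cabs1_conj; rewrite cabsX cw expr1n.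
by rewrite (eq_bigr (fun=> 1)) => [|j _]; rewrite ?expr1n // sumr_const card_ord.
Qed.
End Fourier.

Section Cluster.
Variable R : realType.
Local Notation C := R[i].

Lemma real_cluster (g : nat -> R) : (forall k, -1 <= g k <= 1) ->
  exists c, forall e, 0 < e -> forall n, exists k, (n <= k)%N /\ c - e < g k < c + e.
Proof.
move=> hg.
pose E : set R := fun t => forall n, exists k, (n <= k)%N /\ t <= g k.
have Em1 : E (-1) by move=> n; exists n; split => //; case/andP: (hg n).
have ub : ubound E 1.
  by move=> t Et; have [k [_ hk]] := Et 0%N; apply: le_trans hk _; case/andP: (hg k).
have hs : has_sup E by split; [exists (-1) | exists 1].
exists (sup E) => e e0 n.
have e2 : 0 < e / 2 by rewrite divr_gt0.
have [t Et ht] := sup_adherent e2 hs.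
have nE : ~ E (sup E + e / 2).
  move=> h; have := sup_upper_bound hs h; lra.
have [n0 hn0] : exists n0, forall k, (n0 <= k)%N -> g k < sup E + e / 2.
  apply: contrapT => hc; apply: nE => m.
  apply: contrapT => hm; apply: hc; exists m => k hk.
  rewrite ltNge; apply/negP => hle; apply: hm; by exists k.
have [k [hk1 hk2]] := Et (maxn n n0).
exists k; split; first exact: leq_trans (leq_maxl _ _) hk1.
have h := hn0 k (leq_trans (leq_maxr _ _) hk1).
apply/andP; split; lra.
Qed.

Lemma cabs_sub_conj (a b : C) : cabs (a^* - b) = cabs (a - b^*).
Proof. by rewrite -cabsJ cjB cjK. Qed.

Lemma cabs_parts (z : C) : cabs z ^+ 2 = complex.Re z ^+ 2 + complex.Im z ^+ 2.
Proof. exact: cabs2. Qed.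

Lemma half_cluster (f : nat -> C) (c : R) : (forall k, cabs (f k) = 1) -> -1 <= c <= 1 ->
  (forall e, 0 < e -> forall n, exists k, (n <= k)%N /\ c - e < complex.Re (f k) < c + e /\ 0 <= complex.Im (f k)) ->
  exists z, cabs z = 1 /\ forall e, 0 < e -> forall n, exists k, (n <= k)%N /\ cabs (f k - z) < e.
Proof.
move=> hf hc H.
have hy : 0 <= 1 - c ^+ 2 by case/andP: hc => h1 h2; nra.
pose y := Num.sqrt (1 - c ^+ 2).
have y0 : 0 <= y := sqrtr_ge0 _.
have y2 : y ^+ 2 = 1 - c ^+ 2 by rewrite sqr_sqrtr.
exists (Complex c y); split.
  by rewrite /cabs /= y2 addrC subrK sqrtr1.
move=> eta eta0 n.
pose e := Num.min (eta / 2) (eta ^+ 2 / 4).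
have e0 : 0 < e by rewrite lt_min divr_gt0 // divr_gt0 // exprn_gt0.
have e1 : e <= eta / 2 by rewrite ge_min lexx.
have e2 : e <= eta ^+ 2 / 4 by rewrite ge_min lexx orbT.
have [k [hk [hre him]]] := H e e0 n.
exists k; split => //.
apply: sqr_lt_sqr; first exact: ltW.
have hfk := hf k.
have := cabs_parts (f k); rewrite hfk expr1n.
case: (f k) hre him => a b /= hre him habs.
rewrite cabs_parts /=.
case/andP: hre => hr1 hr2; case/andP: hc => hc1 hc2.
have hb : (b - y) ^+ 2 <= 2 * e.
  have : (b - y) ^+ 2 <= `|b ^+ 2 - y ^+ 2|.
    have [hby|hby] := leP y b.
      rewrite ger0_norm; last by rewrite subr_ge0 ler_pXn2r ?nnegrE.
      nra.
    rewrite ler0_norm; last by rewrite subr_le0 ler_pXn2r ?nnegrE // ltW.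
    nra.
  rewrite y2.
  have -> : b ^+ 2 - (1 - c ^+ 2) = (c - a) * (c + a) by rewrite habs; ring.
  rewrite normrM => h; apply: le_trans h _.
  have h1 : `|c - a| <= e by rewrite ler_norml; apply/andP; split; lra.
  have h2 : `|c + a| <= 2.
    have ha : -1 <= a <= 1 by apply/andP; split; nra.
    rewrite ler_norml; apply/andP; split; case/andP: ha => ? ?; lra.
  rewrite mulrC; apply: le_trans (ler_pM _ _ h2 h1) _ => //.
have ha2 : (a - c) ^+ 2 <= e ^+ 2 by nra.
have : e ^+ 2 <= eta ^+ 2 / 4 by nra.
have : e ^+ 2 + 2 * e < eta ^+ 2 by nra.
rewrite -[(- y)%R]/(- y) in hb.
lra.
Qed.

Lemma circle_cluster (f : nat -> C) : (forall k, cabs (f k) = 1) ->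
  exists z, cabs z = 1 /\ forall e, 0 < e -> forall n, exists k, (n <= k)%N /\ cabs (f k - z) < e.
Proof.
move=> hf.
have hre : forall k, -1 <= complex.Re (f k) <= 1.
  move=> k; have := cabs_parts (f k); rewrite hf expr1n => h.
  have : complex.Re (f k) ^+ 2 <= 1 by rewrite h lerDl sqr_ge0.
  move=> h2; apply/andP; split; nra.
have [c hc] := real_cluster hre.
have hc1 : -1 <= c <= 1.
  apply/andP; split; rewrite leNgt; apply/negP => hlt.
    have e0 : 0 < -1 - c by lra.
    have [k [_ hk]] := hc _ e0 0%N; case/andP: (hre k) => ? ?; case/andP: hk => ? ?; lra.
  have e0 : 0 < c - 1 by lra.
  have [k [_ hk]] := hc _ e0 0%N; case/andP: (hre k) => ? ?; case/andP: hk => ? ?; lra.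
case: (pselect (forall e, 0 < e -> forall n, exists k, (n <= k)%N /\ c - e < complex.Re (f k) < c + e /\ 0 <= complex.Im (f k))) => [Hp|Hn].
  exact: half_cluster hf hc1 Hp.
have [e1 [e10 [n1 hn1]]] : exists e1, 0 < e1 /\ exists n1, forall k, (n1 <= k)%N ->
    c - e1 < complex.Re (f k) < c + e1 -> complex.Im (f k) < 0.
  apply: contrapT => h; apply: Hn => e e0 n.
  apply: contrapT => h2; apply: h; exists e; split => //; exists n => k hk hr.
  rewrite ltNge; apply/negP => him; apply: h2; exists k; split => //.
have hf' : forall k, cabs ((f k)^*) = 1 by move=> k; rewrite cabsJ.
have H' : forall e, 0 < e -> forall n, exists k, (n <= k)%N /\ c - e < complex.Re ((f k)^*) < c + e /\ 0 <= complex.Im ((f k)^*).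
  move=> e e0 n.
  have e2 : 0 < Num.min e e1 by rewrite lt_min e0.
  have [k [hk hk2]] := hc _ e2 (maxn n n1).
  exists k; split; first exact: leq_trans (leq_maxl _ _) hk.
  rewrite ReJ ImJ.
  have hm1 : Num.min e e1 <= e by rewrite ge_min lexx.
  have hm2 : Num.min e e1 <= e1 by rewrite ge_min lexx orbT.
  case/andP: hk2 => hk3 hk4.
  have hr : c - e1 < complex.Re (f k) < c + e1 by apply/andP; split; lra.
  have him := hn1 k (leq_trans (leq_maxr _ _) hk) hr.
  split; [apply/andP; split | ]; [lra | lra | lra].
have [z [hz1 hz2]] := half_cluster hf' hc1 H'.
exists (z^*); split; first by rewrite cabsJ.
move=> e e0 n; have [k [hk hk2]] := hz2 e e0 n.
by exists k; split => //; rewrite -cabs_sub_conj.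
Qed.
End Cluster.

Lemma bernoulli (R : realType) (t : R) m : 0 <= t <= 1 -> 1 - m%:R * t <= (1 - t) ^+ m.
Proof.
case/andP=> t0 t1; elim: m => [|m IH]; first by rewrite mul0r subr0 expr0.
rewrite exprS -natr1.
have h1 : 0 <= 1 - t by lra.
have h2 : 0 <= (1 - t) ^+ m by apply: exprn_ge0.
have : (1 - t) * (1 - m%:R * t) <= (1 - t) * (1 - t) ^+ m by apply: ler_wpM2l.
have : 0 <= m%:R * t * t by rewrite mulr_ge0 // mulr_ge0.
nra.
Qed.

Lemma realCX (R : realType) (a : R) n : ((a ^+ n)%:C)%C = ((a%:C)%C) ^+ n :> R[i].
Proof. by elim: n => [|n IH]; rewrite ?expr0 // !exprS realCM IH. Qed.

Section G.
Variable R : realType.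
Local Notation C := R[i].
Variable V : lmodType C.
Variable ip : V -> V -> C.
Hypothesis hip : inner_product ip.
Local Notation N := (hnorm ip).

Definition apx (B : V -> V) (mu : C) :=
  forall e, 0 < e -> exists w, w != 0 /\ N (B w - mu *: w) < e * N w.

Lemma telesc (B : V -> V) (hl : lin_op B) (d lam : C) (u : V) K : d * lam = 1 ->
  B (\sum_(k < K.+1) d ^+ k *: iter k B u) - lam *: (\sum_(k < K.+1) d ^+ k *: iter k B u)
  = d ^+ K *: iter K.+1 B u - lam *: u.
Proof.
move=> hd; elim: K => [|K IH].
  by rewrite big_ord1 /= expr0 !scale1r.
rewrite big_ord_recr /= (linD hl) (linZ hl) scalerDr opprD addrACA IH.
have e : lam *: (d ^+ K.+1 *: iter K.+1 B u) = d ^+ K *: iter K.+1 B u.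
  by rewrite scalerA exprS mulrA [lam * d]mulrC hd mul1r.
by rewrite e -iterS addrC addrA subrK.
Qed.

Variable B : V -> V.
Hypothesis hB : bounded_op ip B.
Hypothesis inj : forall y, B y = 0 -> y = 0.
Hypothesis LC : forall y, N (B y) ^+ 2 <= N (B (B y)) * N y.
Variable x : V.
Hypothesis hx : N x < N (B x).

Definition a k := N (iter k B x).
Definition r k := a k.+1 / a k.

Lemma x0 : x != 0.
Proof. by apply/eqP => h; move: hx; rewrite h (lin0 hB.1) ltxx. Qed.
Lemma itne0 k : iter k B x != 0.
Proof. elim: k => [|k IH]; first exact: x0. by apply/eqP => /= /inj /eqP; apply/negP. Qed.
Lemma a_gt0 k : 0 < a k.
Proof. rewrite /a; exact: (hnorm_gt0 hip (itne0 k)). Qed.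
Lemma aS k : a k.+1 = r k * a k.
Proof. by rewrite /r mulfVK // gt_eqF // a_gt0. Qed.
Lemma r_mono k : r k <= r k.+1.
Proof.
have h := LC (iter k B x); rewrite -!iterS -/(a k.+1) -/(a k.+2) -/(a k) in h.
have := a_gt0 k; have := a_gt0 k.+1; have := a_gt0 k.+2 => h2 h1 h0.
rewrite /r ler_pdivrMr // mulrAC ler_pdivlMr //.
Qed.
Lemma r_le k m : (k <= m)%N -> r k <= r m.
Proof.
move/subnK => <-; elim: (m - k)%N => [|j IH]; first by rewrite add0n.
by apply: le_trans IH (r_mono _).
Qed.
Lemma r_bnd : exists Mb, forall k, r k <= Mb.
Proof.
have [M M0 hM] := bounded_pos hB; exists M => k.
rewrite /r ler_pdivrMr ?a_gt0 //; exact: hM.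
Qed.
Definition L := sup (fun t => exists k, t = r k).
Lemma hsupr : has_sup (fun t => exists k, t = r k).
Proof.
split; first by exists (r 0); exists 0%N.
by have [Mb hMb] := r_bnd; exists Mb => t [k ->].
Qed.
Lemma rL k : r k <= L.
Proof. by apply: (sup_upper_bound hsupr); exists k. Qed.
Lemma L_gt1 : 1 < L.
Proof.
apply: lt_le_trans (rL 0); rewrite /r ltr_pdivlMr ?a_gt0 // mul1r.
exact: hx.
Qed.
Lemma L_gt0 : 0 < L. Proof. exact: lt_trans ltr01 L_gt1. Qed.
Lemma adh d : 0 < d -> exists k, L - d < r k.
Proof. by move=> d0; have [t [k ->] h] := sup_adherent d0 hsupr; exists k. Qed.
Lemma grow_lo n j : r n ^+ j * a n <= a (j + n).
Proof.
elim: j => [|j IH]; first by rewrite expr0 mul1r add0n.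
rewrite addSn aS exprS -mulrA.
have r0 : 0 <= r n by rewrite /r divr_ge0 // ltW // a_gt0.
apply: le_trans (ler_wpM2l r0 IH) _.
apply: ler_wpM2r; first exact: ltW (a_gt0 _).
by apply: r_le; rewrite leq_addl.
Qed.
Lemma grow_hi n j : a (j + n) <= L ^+ j * a n.
Proof.
elim: j => [|j IH]; first by rewrite expr0 mul1r add0n.
rewrite addSn aS exprS -mulrA.
apply: le_trans (_ : L * a (j + n) <= _).
  by apply: ler_wpM2r; [exact: ltW (a_gt0 _) | exact: rL].
by apply: ler_wpM2l; [exact: ltW L_gt0 | exact: IH].
Qed.

Lemma Re_sum (I : Type) (rr : seq I) (F : I -> C) :
  complex.Re (\sum_(i <- rr) F i) = \sum_(i <- rr) complex.Re (F i).
Proof. elim: rr => [|y rr IH]; first by rewrite !big_nil. by rewrite !big_cons ReD IH. Qed.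

Lemma realCn m : (m%:R : C) = (((m%:R : R))%:C)%C.
Proof. elim: m => [|m IH]; first by []. by rewrite -!natr1 realCD IH. Qed.

Lemma claimK k : exists z : C, cabs z = 1 /\ exists w, w != 0 /\
  nsq ip (B w - (((L%:C)%C) * z) *: w) <= 8 * L ^+ 2 / k.+1%:R * nsq ip w.
Proof.
have hl := hB.1.
pose K := k.+1.
have K0 : (0 < K)%N by [].
have [om pom] := @prim_root_exists R K K0.
have cw : cabs om = 1 := root_unit_cabs K0 (prim_expr_order pom).
have KR : 0 < K%:R :> R by rewrite ltr0n.
have dpos : 0 < L / (4 * K%:R) by rewrite divr_gt0 ?L_gt0 // mulr_gt0.
have [n hn] := adh dpos.
have Lp := L_gt0.
set u := iter n B x.
pose v (j : 'I_K) := (((L ^- j)%:C)%C) *: iter j B u.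
have hit : forall j, N (iter j B u) = a (j + n) by move=> j; rewrite /a iterD.
have hv : forall j : 'I_K, nsq ip (v j) = (L ^- j * a (j + n)) ^+ 2.
  move=> j; rewrite /v (nsqZr hip) -(hnorm2 hip) hit; by rewrite exprMn.
pose q := r n / L.
have r0 : 0 <= r n by rewrite /r divr_ge0 // ltW // a_gt0.
have q0 : 0 <= q by rewrite /q divr_ge0 // ltW.
have q1 : q <= 1 by rewrite /q ler_pdivrMr // mul1r rL.
have q2 : 1 - q <= (4 * K%:R)^-1.
  have h : L - r n <= L / (4 * K%:R) by lra.
  have e : 1 - q = (L - r n) / L by rewrite /q mulrBl mulfV ?gt_eqF.
  by rewrite e ler_pdivrMr // mulrC.
have an := a_gt0 n.
have lowv : forall j : 'I_K, a n ^+ 2 / 2 <= nsq ip (v j).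
  move=> j; rewrite hv.
  have hj : (j < K)%N := ltn_ord j.
  have b1 : 1 - (2 * j)%:R * (1 - q) <= q ^+ (2 * j).
    have hq : 0 <= 1 - q <= 1 by apply/andP; split; lra.
    have := @bernoulli R (1 - q) (2 * j) hq.
    have e : 1 - (1 - q) = q by ring.
    by rewrite e.
  have b2 : (2 * j)%:R * (1 - q) <= 2^-1.
    apply: le_trans (_ : (2 * j)%:R * (4 * K%:R)^-1 <= _).
      by apply: ler_wpM2l; first exact: ler0n.
    rewrite natrM ler_pdivrMr ?mulr_gt0 //.
    have : (j%:R : R) <= K%:R by rewrite ler_nat ltnW.
    lra.
  have gl := grow_lo n j.
  have ge : L ^- j * (r n ^+ j * a n) <= L ^- j * a (j + n).
    by apply: ler_wpM2l => //; rewrite invr_ge0 exprn_ge0 // ltW.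
  have qe : L ^- j * (r n ^+ j * a n) = q ^+ j * a n.
    by rewrite /q; move: (r n) => s; rewrite exprMn exprVn mulrA [L ^- j * _]mulrC.
  rewrite qe in ge.
  have h0 : 0 <= q ^+ j * a n by rewrite mulr_ge0 // ?exprn_ge0 // ltW.
  have : (q ^+ j * a n) ^+ 2 <= (L ^- j * a (j + n)) ^+ 2 by rewrite ler_pXn2r ?nnegrE // (le_trans h0).
  rewrite exprMn -exprM mulnC => h1; apply: le_trans h1.
  have : 0 <= a n ^+ 2 by rewrite exprn_ge0 // ltW.
  nra.
pose S := \sum_(j < K) nsq ip (v j).
have hS : K%:R * (a n ^+ 2 / 2) <= S.
  have h : \sum_(j < K) (a n ^+ 2 / 2) <= S by apply: ler_sum => j _; exact: lowv.
  by rewrite sumr_const card_ord in h; rewrite mulr_natl.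
pose W (j : 'I_K) := \sum_(kk < K) ((om ^+ j) ^+ kk) *: v kk.
have par := parseval hip v pom.
have parR : \sum_(j < K) nsq ip (W j) = K%:R * S.
  have := congr1 (@complex.Re R) par.
  by rewrite Re_sum realCn ReMC Re_sum.
have [j0 hj0] : exists j0 : 'I_K, S <= nsq ip (W j0).
  apply: contrapT => hc.
  have hlt : forall j, nsq ip (W j) < S.
    by move=> j; rewrite ltNge; apply/negP => h; apply: hc; exists j.
  have : \sum_(j < K) nsq ip (W j) < \sum_(j < K) S.
    by apply: ltr_sum; [apply/hasP; exists (Ordinal K0); rewrite ?mem_index_enum | move=> j _; apply: hlt].
  by rewrite parR sumr_const card_ord -[S *+ K]mulr_natl ltxx.
pose c := om ^+ j0.
have cc : cabs c = 1 by rewrite /c cabsX cw expr1n.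
have c0 : c != 0 by rewrite -cabs_eq0 cc oner_eq0.
have Lc0 : ((L%:C)%C : C) != 0 by apply/negP => /eqP [] /eqP; rewrite gt_eqF.
pose d := c * ((L^-1)%:C)%C.
pose lam := ((L%:C)%C) * c^-1.
have hd : d * lam = 1 by rewrite /d /lam realCV; field; apply/andP; split.
have hW : W j0 = \sum_(kk < K) d ^+ kk *: iter kk B u.
  apply: eq_bigr => kk _; rewrite /v scalerA; congr (_ *: _).
  by rewrite /d exprMn -realCX exprVn.
have ht := telesc hl u k hd.
rewrite -hW in ht.
exists c^-1; split; first by rewrite cabsV cc invr1.
have hwpos : 0 < nsq ip (W j0).
  apply: lt_le_trans hj0; apply: lt_le_trans hS.
  by rewrite mulr_gt0 // divr_gt0 // exprn_gt0.
exists (W j0); split.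
  by apply/eqP => h; move: hwpos; rewrite h (nsq0 hip) ltxx.
rewrite -/lam ht.
have cd : cabs d = L^-1 by rewrite /d cabsM cc mul1r cabsC ger0_norm // invr_ge0 ltW.
have clam : cabs lam = L by rewrite /lam cabsM cabsC cabsV cc invr1 mulr1 ger0_norm // ltW.
have hN : N (d ^+ k *: iter k.+1 B u - lam *: u) <= 2 * L * a n.
  have hb := hnormB hip (d ^+ k *: iter k.+1 B u) (lam *: u); apply: le_trans hb _.
  rewrite !(hnormZ hip) cabsX cd clam hit.
  have := grow_hi n k.+1.
  have hLk : 0 <= L^-1 ^+ k by rewrite exprn_ge0 // invr_ge0 ltW.
  move=> h; have := ler_wpM2l hLk h.
  have -> : L^-1 ^+ k * (L ^+ k.+1 * a n) = L * a n.
    rewrite exprVn exprS; field; by rewrite expf_neq0 // gt_eqF.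
  rewrite -/(a n) => h2.
  rewrite /u -/(a n); lra.
rewrite -(hnorm2 hip).
have hN2 : N (d ^+ k *: iter k.+1 B u - lam *: u) ^+ 2 <= (2 * L * a n) ^+ 2.
  by rewrite ler_pXn2r ?nnegrE ?hnorm_ge0 // mulr_ge0 // ?mulr_ge0 // ltW.
apply: le_trans hN2 _.
have e8 : 8 * L ^+ 2 / K%:R * (K%:R * (a n ^+ 2 / 2)) = (2 * L * a n) ^+ 2.
  by field; rewrite gt_eqF.
rewrite -e8; apply: ler_wpM2l.
  by rewrite divr_ge0 ?ler0n // mulr_ge0 // exprn_ge0 // ltW.
exact: le_trans hS hj0.
Qed.

Theorem G_main : exists mu : C, 1 < cabs mu /\ apx B mu.
Proof.
have hl := hB.1.
have [zf hzf] := choice claimK.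
have hc1 : forall k, cabs (zf k) = 1 by move=> k; case: (hzf k).
have [z [hz1 hz2]] := circle_cluster hc1.
have Lp := L_gt0.
exists (((L%:C)%C) * z); split.
  by rewrite cabsM hz1 mulr1 cabsC ger0_norm ?L_gt1 // ltW.
move=> e e0.
have e2 : 0 < e / 2 by rewrite divr_gt0.
have e3 : 0 < (e / 2) ^+ 2 / (8 * L ^+ 2) by rewrite divr_gt0 ?exprn_gt0 // mulr_gt0 // exprn_gt0.
have [K0 hK0] := exists_inv e3.
have eL : 0 < e / (2 * L) by rewrite divr_gt0 // mulr_gt0.
have [k [hk hkz]] := hz2 _ eL K0.
case: (hzf k) => _ [w [w0 hw]].
exists w; split => //.
have nw := hnorm_gt0 hip w0.
have h1 : N (B w - (((L%:C)%C) * zf k) *: w) < e / 2 * N w.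
  apply: sqr_lt_sqr; first by rewrite mulr_ge0 // ltW.
  rewrite (hnorm2 hip); apply: le_lt_trans hw _.
  rewrite exprMn (hnorm2 hip).
  have nq : 0 < nsq ip w by rewrite -(hnorm2 hip) exprn_gt0.
  rewrite ltr_pM2r //.
  have hk1 : k.+1%:R^-1 < (e / 2) ^+ 2 / (8 * L ^+ 2).
    by apply: le_lt_trans hK0; apply: inv_mono.
  have L2 : 0 < 8 * L ^+ 2 by rewrite mulr_gt0 // exprn_gt0.
  rewrite ltr_pdivlMr // mulrC in hk1.
  exact: hk1.
have h2 : N ((((L%:C)%C) * zf k - ((L%:C)%C) * z) *: w) <= e / 2 * N w.
  rewrite (hnormZ hip) -mulrBr cabsM cabsC ger0_norm; last exact: ltW Lp.
  rewrite ler_pM2r //.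
  have : L * cabs (zf k - z) < L * (e / (2 * L)) by rewrite ltr_pM2l.
  have -> : L * (e / (2 * L)) = e / 2 by field; rewrite gt_eqF.
  by move=> h; exact: ltW.
have eq : B w - (((L%:C)%C) * z) *: w =
   (B w - (((L%:C)%C) * zf k) *: w) + ((((L%:C)%C) * zf k - ((L%:C)%C) * z) *: w).
  by rewrite scalerBl addrA subrK.
rewrite eq; apply: le_lt_trans (hnormD hip _ _) _.
have -> : e * N w = e / 2 * N w + e / 2 * N w by rewrite -mulrDl -splitr.
exact: ltr_leD h1 h2.
Qed.
End G.

Lemma complex_ext (R : realType) (z w : R[i]) :
  complex.Re z = complex.Re w -> complex.Im z = complex.Im w -> z = w.
Proof. by case: z => a b; case: w => c d /= -> ->. Qed.

Section Part1.
Variable R : realType.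
Local Notation C := R[i].
Variable V : lmodType C.
Variable ip : V -> V -> C.
Hypothesis hip : inner_product ip.
Hypothesis hcomp : complete ip.
Local Notation N := (hnorm ip).

Lemma bounded_comp f g : bounded_op ip f -> bounded_op ip g -> bounded_op ip (f \o g).
Proof.
move=> hf hg; split.
  by move=> a x y /=; rewrite hg.1 hf.1.
have [Mf Mf0 hMf] := bounded_pos hf; have [Mg Mg0 hMg] := bounded_pos hg.
exists (Mf * Mg) => x /=; apply: le_trans (hMf _) _.
by rewrite -mulrA; apply: ler_wpM2l; [exact: ltW | exact: hMg].
Qed.

Lemma nsq_le_hnorm x y : nsq ip x <= nsq ip y -> N x <= N y.
Proof. by move=> h; rewrite /hnorm ler_sqrt // nsq_ge0. Qed.

Lemma Re_ip_i u v : complex.Re (ip u ('i%C *: v)) = complex.Im (ip u v).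
Proof.
rewrite (ipZr hip) ReM.
have -> : ('i%C : C)^* = Complex 0 (-1) by [].
by rewrite /= mul0r sub0r mulN1r opprK.
Qed.

Variable T : V -> V.
Hypothesis hT : bounded_op ip T.
Hypothesis hap : forall lam : C, ap_spectrum ip T lam -> `|lam| = 1.
Hypothesis hhyp : hyponormal_restr ip (Hu (Tprime ip T)) (Tprime ip T).

Theorem part1 : invertible ip T -> unitary ip T.
Proof.
case=> S0 [hS0b [hS0T hTS0]].
have hlT := hT.1; have hlS := hS0b.1.
set Ts := adj ip T; set A := adj ip S0.
have adjT : forall x y, ip (T x) y = ip x (Ts y) := adj_ip hip hcomp hT.
have adjS : forall x y, ip (S0 x) y = ip x (A y) := adj_ip hip hcomp hS0b.
have adjS' : forall x y, ip (A x) y = ip x (S0 y) := adj_ip' hip hcomp hS0b.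
have hbA : bounded_op ip A := adj_bounded hip hcomp hS0b.
have hbTs : bounded_op ip Ts := adj_bounded hip hcomp hT.
have hlA := hbA.1; have hlTs := hbTs.1.
have hTsA : forall y, Ts (A y) = y.
  by move=> y; apply: (ip_ext hip) => x; rewrite -adjT -adjS hS0T.
have hATs : forall y, A (Ts y) = y.
  by move=> y; apply: (ip_ext hip) => x; rewrite -adjS -adjT hTS0.
have hinv : is_inverse ip (Ts \o T) (S0 \o A).
  split; first exact: bounded_comp.
  by split => y /=; [rewrite hATs hS0T | rewrite hTS0 hTsA].
have hTp : Tprime ip T = A.
  by apply: funext => y; rewrite /Tprime /= (inv_op_eq hinv) /= hTS0.
have hh := hhyp; rewrite hTp in hh.
case: hh => _ [S [_ [hSadj hpos]]].
have hall : forall y, Hu A y.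
  move=> y n; exists (iter n Ts y); elim: n => [|n IH] //.
  by rewrite iterSr iterS hATs.
have hSS0 : forall y, S y = S0 y.
  move=> y; apply: (ip_ext hip) => x; by rewrite -(hSadj _ _ (hall x) (hall y)) adjS'.
have HN : forall x, N (S0 x) <= N (A x).
  move=> x; apply: nsq_le_hnorm.
  have := hpos x (hall x); rewrite !hSS0 (ipBl hip) (adjS' (S0 x)) (adjS (A x)).
  by rewrite !(ipxxE hip) -realCB -realC0 lecRR subr_ge0.
have LCA : forall y, N (A y) ^+ 2 <= N (A (A y)) * N y.
  move=> y; rewrite (hnorm2 hip) /nsq adjS'.
  apply: le_trans (ReCS hip _ _) _.
  by rewrite mulrC; apply: ler_wpM2r; [exact: hnorm_ge0 | exact: HN].
have LCTs : forall y, N (Ts y) ^+ 2 <= N (Ts (Ts y)) * N y.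
  move=> y; have := LCA (Ts (Ts y)); rewrite !hATs.
  by rewrite mulrC.
have injA : forall y, A y = 0 -> y = 0.
  by move=> y h; rewrite -(hTsA y) h (lin0 hlTs).
have injTs : forall y, Ts y = 0 -> y = 0.
  by move=> y h; rewrite -(hATs y) h (lin0 hlA).
have hshift : forall mu x, N (S0 x - mu^* *: x) <= N (A x - mu *: x).
  move=> mu x; apply: nsq_le_hnorm.
  rewrite !(nsqB hip) !(nsqZ hip) cabsJ !(ipZr hip) cjK.
  have -> : ip (A x) x = (ip (S0 x) x)^* by rewrite adjS' -(ipC hip).
  rewrite -cjM ReJ.
  have := HN x; rewrite /hnorm ler_sqrt ?nsq_ge0 //.
  lra.
have [MT MT0 hMT] := bounded_pos hT.
have [MA MA0 hMA] := bounded_pos hbA.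
have tr1 : forall mu, mu != 0 -> apx ip A mu -> ap_spectrum ip T ((mu^*)^-1).
  move=> mu mu0 hmu; apply: (ap_of hip hlT) => e e0.
  have cm : 0 < cabs mu by rewrite lt_neqAle cabs_ge0 eq_sym cabs_eq0 mu0.
  have [w [w0 hw]] := hmu (e * cabs mu / MT) (divr_gt0 (mulr_gt0 e0 cm) MT0).
  exists w; split => //.
  have mu0' : mu^* != 0 by rewrite conjC_eq0.
  have eq : T w - (mu^*)^-1 *: w = - (mu^*)^-1 *: T (S0 w - mu^* *: w).
    rewrite (linB hlT) (linZ hlT) hTS0 scalerBr scalerA mulNr mulVf // scaleN1r opprK.
    by rewrite scaleNr addrC.
  rewrite eq (hnormZ hip) cabsN cabsV cabsJ.
  have h1 := hMT (S0 w - mu^* *: w).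
  have h2 := le_lt_trans (hshift mu w) hw.
  have nw := hnorm_gt0 hip w0.
  have h3 : N (T (S0 w - mu^* *: w)) < e * cabs mu * N w.
    apply: le_lt_trans h1 _.
    have : MT * N (S0 w - mu^* *: w) < MT * (e * cabs mu / MT * N w) by rewrite ltr_pM2l.
    have -> : MT * (e * cabs mu / MT * N w) = e * cabs mu * N w by field; rewrite gt_eqF.
    done.
  have -> : e * N w = (cabs mu)^-1 * (e * cabs mu * N w) by field; rewrite gt_eqF.
  by rewrite ltr_pM2l // invr_gt0.
have tr2 : forall lam, lam != 0 -> apx ip Ts lam -> apx ip A lam^-1.
  move=> lam l0 hlam e e0.
  have cl : 0 < cabs lam by rewrite lt_neqAle cabs_ge0 eq_sym cabs_eq0 l0.
  have [w [w0 hw]] := hlam (e * cabs lam / MA) (divr_gt0 (mulr_gt0 e0 cl) MA0).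
  exists w; split => //.
  have eq : A w - lam^-1 *: w = - lam^-1 *: A (Ts w - lam *: w).
    rewrite (linB hlA) (linZ hlA) hATs scalerBr scalerA mulNr mulVf // scaleN1r opprK.
    by rewrite scaleNr addrC.
  rewrite eq (hnormZ hip) cabsN cabsV.
  have h1 := hMA (Ts w - lam *: w).
  have nw := hnorm_gt0 hip w0.
  have h3 : N (A (Ts w - lam *: w)) < e * cabs lam * N w.
    apply: le_lt_trans h1 _.
    have : MA * N (Ts w - lam *: w) < MA * (e * cabs lam / MA * N w) by rewrite ltr_pM2l.
    have -> : MA * (e * cabs lam / MA * N w) = e * cabs lam * N w by field; rewrite gt_eqF.
    done.
  have -> : e * N w = (cabs lam)^-1 * (e * cabs lam * N w) by field; rewrite gt_eqF.
  by rewrite ltr_pM2l // invr_gt0.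
have nap : forall mu, 1 < cabs mu -> apx ip A mu -> False.
  move=> mu hm hmu.
  have mu0 : mu != 0 by rewrite -cabs_eq0 gt_eqF // (lt_trans ltr01).
  have := hap (tr1 mu mu0 hmu).
  rewrite normcE' cabsV cabsJ -realC1 => /realCI /eqP.
  by rewrite invr_eq1 => /eqP h; move: hm; rewrite h ltxx.
have nap2 : forall mu, cabs mu < 1 -> mu != 0 -> apx ip A mu -> False.
  move=> mu hm mu0 hmu.
  have := hap (tr1 mu mu0 hmu).
  rewrite normcE' cabsV cabsJ -realC1 => /realCI /eqP.
  by rewrite invr_eq1 => /eqP h; move: hm; rewrite h ltxx.
have isoA : forall x, N (A x) = N x.
  move=> x; case: (ltgtP (N (A x)) (N x)) => // h.
    have hx' : N (A x) < N (Ts (A x)) by rewrite hTsA.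
    have [lam [hl1 hl2]] := G_main hip hbTs injTs LCTs hx'.
    have l0 : lam != 0 by rewrite -cabs_eq0 gt_eqF // (lt_trans ltr01).
    exfalso; apply: (nap2 lam^-1); last exact: tr2.
      by rewrite cabsV invf_lt1 // (lt_trans ltr01).
    by rewrite invr_eq0.
  have [mu [hm1 hm2]] := G_main hip hbA injA LCA h.
  by exfalso; apply: (nap mu).
have isoA2 : forall x, nsq ip (A x) = nsq ip x by move=> x; rewrite -!(hnorm2 hip) isoA.
have ReA : forall x y, complex.Re (ip (A x) (A y)) = complex.Re (ip x y).
  move=> x y.
  have h1 := nsqD hip (A x) (A y); have h2 := nsqD hip x y.
  rewrite -(linD hlA) !isoA2 in h1.
  lra.
have hS0A : forall x, S0 (A x) = x.
  move=> x; apply: (ip_extl hip) => y; rewrite adjS.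
  apply: complex_ext; first exact: ReA.
  by rewrite -!(Re_ip_i) -(linZ hlA) ReA.
have hS0Ts : forall y, S0 y = Ts y by move=> y; rewrite -{1}(hATs y) hS0A.
by split => x; rewrite -/Ts -hS0Ts; [exact: hS0T | exact: hTS0].
Qed.
End Part1.


Unset Implicit Arguments.
Theorem proposition2p4 (R : realType) (V : lmodType R[i]) (ip : V -> V -> R[i])
  (hip : inner_product ip) (hcomp : complete ip) (T : V -> V)
  (hT : bounded_op ip T)
  (hap : forall lam : R[i], ap_spectrum ip T lam -> `|lam| = 1)
  (hhyp : hyponormal_restr ip (Hu (Tprime ip T)) (Tprime ip T)) :
  (invertible ip T -> unitary ip T) /\
  (analytic T -> completely_non_normal ip T).
Proof.
split.
  exact: (part1 hip hcomp hT hap hhyp).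
exact: (part2 hip hcomp hT hap).
Qed.
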